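(* Let $X,Y$ be real Banach spaces with a bilinear map $\langle\cdot,\cdot\rangle\colon X\times Y\to\mathbb{R}$ and normalized sequences $(e_j)\subset X$, $(f_j)\subset Y$ satisfying (B1)–(B5) below. Let $T\colon X\to X$ be a bounded linear operator with $\delta:=\inf_j\langle Te_j,f_j\rangle>0$. Let $L\in2\mathbb{N}$, $N\in\mathbb{N}$ with $N\ge L$, and let $\mathcal{A}\subset\mathbb{N}$ with $|\mathcal{A}|=N$. Then $$\frac{1}{|\Omega_L^{\mathcal{A}}|}\sum_{(\mathcal{B},(\varepsilon_k))\in\Omega_L^{\mathcal{A}}}\bigl\langle Tb_{\mathcal{B}}^{(\varepsilon_k)},d_{\mathcal{B}}^{(\varepsilon_k)}\bigr\rangle\ \ge\ \Bigl[\delta-C_d\frac{\|T\|}{N-1}\nu(N)\Bigr]\cdot L.$$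
   Context: Standing assumptions: (B1) if $\langle x,y\rangle=0$ for all $y\in Y$ then $x=0$; (B2) if $\langle x,y\rangle=0$ for all $x\in X$ then $y=0$; (B3) there is $C_d>0$ with $|\langle x,y\rangle|\le C_d\|x\|\|y\|$; (B4) $\langle e_j,f_k\rangle=1$ if $j=k$ and $0$ otherwise; (B5) every $x\in X$ has the unique representation $x=\sum_j\langle x,f_j\rangle e_j$ converging in $\sigma(X,Y)$, the topology generated by the seminorms $x\mapsto|\langle x,y\rangle|$, $y\in Y$. For finite $\mathcal{B}$, $\mathcal{E}(\mathcal{B})=\{(\varepsilon_k)\in\{\pm1\}^{\mathcal{B}}:\sum_{k\in\mathcal{B}}\varepsilon_k=0\}$. For $\mathcal{A}$ finite with $|\mathcal{A}|\ge L$, $\Omega_L^{\mathcal{A}}=\{(\mathcal{B},(\varepsilon_k)):\mathcal{B}\subset\mathcal{A},\ |\mathcal{B}|=L,\ (\varepsilon_k)\in\mathcal{E}(\mathcal{B})\}$, and $b_{\mathcal{B}}^{(\varepsilon_k)}=\sum_{k\in\mathcal{B}}\varepsilon_ke_k$, $d_{\mathcal{B}}^{(\varepsilon_k)}=\sum_{k\in\mathcal{B}}\varepsilon_kf_k$. The function $\nu\colon\mathbb{N}\to[0,\infty]$ is $$\nu(n)=\sup\Bigl\{\min\Bigl(\max_{l\in\mathcal{A}}\Bigl\|\sum_{k\in\mathcal{A}\setminus\{l\}}e_k\Bigr\|_X,\ \max_{k\in\mathcal{A}}\Bigl\|\sum_{l\in\mathcal{A}\setminus\{k\}}f_l\Bigr\|_Y\Bigr):\mathcal{A}\subset\mathbb{N},\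 |\mathcal{A}|=n\Bigr\}.$$ *)

(* Defs.v *)
From HB Require Import structures.
From mathcomp Require Import all_boot all_order all_algebra.
From mathcomp Require Import finmap.
From mathcomp Require Import all_classical all_reals all_analysis.
Set Implicit Arguments. Unset Strict Implicit. Unset Printing Implicit Defensive.
Import Order.TTheory GRing.Theory Num.Theory.
Import numFieldNormedType.Exports.
Local Open Scope classical_set_scope.
Local Open Scope ring_scope.
Local Open Scope fset_scope.

Section Defs.
Variable R : realType.

Definition opnorm (X : normedModType R) (T : X -> X) : R :=
  sup [set `|T x| | x in [set x : X | `|x| <= 1]].

Definition delta_of (X Y : normedModType R) (pair : X -> Y -> R) (T : X -> X)
  (e : nat -> X) (f : nat -> Y) : R :=
  inf [set pair (T (e j)) (f j) | j in [set: nat]].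

Definition maxdel (V : normedModType R) (v : nat -> V) (A : {fset nat}) : R :=
  \big[Num.max/0]_(l <- A) `|\sum_(k <- A | k != l) v k|.

Definition nu (X Y : normedModType R) (e : nat -> X) (f : nat -> Y) (n : nat)
  : \bar R :=
  ereal_sup [set (Num.min (maxdel e A) (maxdel f A))%:E
            | A in [set A : {fset nat} | #|` A| = n]].

Definition sgn (o : option bool) : int :=
  match o with Some true => 1 | Some false => -1 | None => 0 end.

(* Omega_L^A: a pair (B, eps) with B a subset of A of size L and
   eps in E(B). eps : B -> {+1,-1} is encoded as a finite function on A
   with values in option bool that is None exactly outside B
   (a bijective encoding of {+1,-1}^B). *)
Definition Omega (A : {fset nat}) (L : nat) :
    {set ({set A} * {ffun A -> option bool})%type} :=
  [set p : ({set A} * {ffun A -> option bool})%type |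
     [&& #|p.1| == L,
         [forall k : A, (k \in p.1) == (p.2 k != None)]
       & \sum_(k in p.1) sgn (p.2 k) == 0]].

Definition bvec (V : normedModType R) (A : {fset nat}) (v : nat -> V)
  (p : ({set A} * {ffun A -> option bool})%type) : V :=
  \sum_(k in p.1) (sgn (p.2 k))%:~R *: v (fsval k).

End Defs.

(* Main.v *)
Require Import Defs.
From HB Require Import structures.
From mathcomp Require Import all_boot all_order all_algebra.
From mathcomp Require Import finmap.
From mathcomp Require Import all_classical all_reals all_analysis.
From mathcomp Require Import all_fingroup.
From mathcomp Require Import ring lra.
Import Order.TTheory GRing.Theory Num.Theory.
Import numFieldNormedType.Exports.
Local Open Scope classical_set_scope.
Local Open Scope ring_scope.

Section Comb.
Variable R : realType.
Variable A : {fset nat}.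
Variable L : nat.

Local Notation PT := ({set A} * {ffun A -> option bool})%type.

Definition sg (p : PT) (k : A) : R := (sgn (p.2 k))%:~R.

Lemma OmegaP p : p \in Omega A L ->
  [/\ #|p.1| = L, forall k, (k \in p.1) = (p.2 k != None) &
     \sum_(k in p.1) sgn (p.2 k) = 0].
Proof.
rewrite inE => /and3P[/eqP h1 /forallP h2 /eqP h3]; split => // k.
exact/eqP.
Qed.

Lemma sg_out p k : p \in Omega A L -> k \notin p.1 -> sg p k = 0.
Proof.
move=> /OmegaP[_ h _]; rewrite h negbK => /eqP hk; by rewrite /sg hk.
Qed.

Lemma sum_sg_in p (F : A -> R) : p \in Omega A L ->
  \sum_(k in p.1) sg p k * F k = \sum_k sg p k * F k.
Proof.
move=> hp; rewrite [RHS](bigID (fun k => k \in p.1)) /=.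
rewrite [X in _ + X]big1 ?addr0 // => k hk.
by rewrite sg_out // mul0r.
Qed.

Lemma sum_sg p : p \in Omega A L -> \sum_k sg p k = 0.
Proof.
move=> hp; have := sum_sg_in p (fun _ => 1) hp.
under eq_bigr do rewrite mulr1.
under [in X in _ = X -> _]eq_bigr do rewrite mulr1.
move=> <-; case/OmegaP: hp => _ _ h3.
by rewrite /sg -rmorph_sum h3.
Qed.

Lemma sum_sg2 p : p \in Omega A L -> \sum_k sg p k * sg p k = L%:R.
Proof.
move=> hp; rewrite -(sum_sg_in p (sg p) hp).
case/OmegaP: (hp) => h1 h2 _.
rewrite -[in RHS]h1 -sumr_const; apply: eq_bigr => k hk.
move: hk; rewrite h2 /sg; case: (p.2 k) => // -[] _ /=; by rewrite ?mulrNN mulr1.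
Qed.

Definition hp (s : {perm A}) (p : PT) : PT :=
  ((s^-1)%g @^-1: p.1, [ffun k => p.2 ((s^-1)%g k)]).

Lemma hpK (s : {perm A}) : cancel (hp s) (hp (s^-1)%g).
Proof.
move=> [B g]; rewrite /hp /=; congr pair.
  by apply/setP => k; rewrite !inE invgK permK.
by apply/ffunP => k; rewrite !ffunE invgK permK.
Qed.

Lemma hp_in (s : {perm A}) p : p \in Omega A L -> hp s p \in Omega A L.
Proof.
case/OmegaP => h1 h2 h3; rewrite inE /hp /=; apply/and3P; split.
- by rewrite card_preimset ?h1 //; exact: perm_inj.
- by apply/forallP => k; rewrite !inE ffunE h2.
- rewrite (reindex_inj (@perm_inj _ s)) /=.
  rewrite -[X in _ == X]h3; apply/eqP/eq_big => k; rewrite ?inE ?ffunE permK //.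
Qed.

Lemma hp_inE (s : {perm A}) p : (hp s p \in Omega A L) = (p \in Omega A L).
Proof.
apply/idP/idP; last exact: hp_in.
by move=> /(hp_in (s^-1)%g); rewrite hpK.
Qed.

Lemma coef_perm (s : {perm A}) k l :
  \sum_(p in Omega A L) sg p (s k) * sg p (s l) =
  \sum_(p in Omega A L) sg p k * sg p l.
Proof.
rewrite (reindex_inj (can_inj (hpK s))) /=.
apply: eq_big => p; first by rewrite hp_inE.
by move=> _; rewrite /sg /hp /= !ffunE !permK.
Qed.

Lemma coef_const k l k' l' : k != l -> k' != l' ->
  \sum_(p in Omega A L) sg p k * sg p l =
  \sum_(p in Omega A L) sg p k' * sg p l'.
Proof.
move=> hkl hkl'.
pose l1 := tperm k k' l.
have hl1 : k' != l1.
  by rewrite /l1 -{1}(tpermL k k') (inj_eq (can_inj (tpermK k k'))).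
pose s := (tperm k k' * tperm l1 l')%g.
have -> : k' = s k by rewrite permM tpermL tpermD // eq_sym.
have -> : l' = s l by rewrite permM -/l1 tpermL.
by rewrite coef_perm.
Qed.

End Comb.

Lemma card_lt_ord (n L : nat) : (L <= n)%N -> #|[set i : 'I_n | (i < L)%N]%SET| = L.
Proof.
move=> hL; rewrite -sum1_card (eq_bigl (fun i : 'I_n => (i < L)%N)); last by move=> i; rewrite inE.
by rewrite -(big_ord_widen n (fun _ => 1%N) hL) sum1_card card_ord.
Qed.

Lemma Omega_nonempty (A : {fset nat}) (L : nat) :
  ~~ odd L -> (L <= #|` A|)%N -> (0 < #|Omega A L|)%N.
Proof.
move=> hodd hL.
have hL' : (L <= #|{: A}|)%N by move: hL; rewrite cardfE.
pose B := [set k : A | (enum_rank k < L)%N]%SET.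
pose g := [ffun k : A => if (enum_rank k < L)%N then Some (enum_rank k < L./2)%N else None].
apply/card_gt0P; exists (B, g); rewrite inE /=; apply/and3P; split.
- have -> : B = enum_rank @^-1: [set i : 'I_#|{: A}| | (i < L)%N]%SET.
    by apply/setP => k; rewrite !inE.
  rewrite on_card_preimset ?card_lt_ord //.
  exact: onW_bij (enum_rank_bij _).
- by apply/forallP => k; rewrite !inE ffunE; case: ifP.
- rewrite (reindex _ (onW_bij _ (enum_val_bij _))) /=.
  under eq_big => [i|i _].
    rewrite inE enum_valK. over.
    rewrite ffunE enum_valK. over.
  rewrite -(big_ord_widen _ (fun i => sgn (if (i < L)%N then Some (i < L./2)%N else None)) hL') /=.
  have hLe : L = (L./2 + L./2)%N.
    by rewrite addnn -[in LHS](odd_double_half L) (negbTE hodd).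
  move: (L./2) hLe => M ->.
  rewrite big_split_ord /=.
  under eq_bigr => i _ do rewrite ltn_addr // (ltn_ord i).
  under [X in _ + X]eq_bigr => i _ do rewrite /= ltn_add2l ltn_ord ltnNge leq_addr.
  by rewrite !sumr_const card_ord /= mulNrn subrr.
Qed.

Section Analysis.
Variable R : realType.
Variables X Y : normedModType R.
Variable pair : X -> Y -> R.
Hypothesis hl : forall (a : R) (x x' : X) (y : Y), pair (a *: x + x') y = a * pair x y + pair x' y.
Hypothesis hr : forall (a : R) (x : X) (y y' : Y), pair x (a *: y + y') = a * pair x y + pair x y'.

Lemma pair0l y : pair 0 y = 0.
Proof.
have h := hl 1 0 0 y; rewrite scale1r addr0 mul1r in h.
by apply: (addrI (pair 0 y)); rewrite addr0 -h.
Qed.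

Lemma pair0r x : pair x 0 = 0.
Proof.
have h := hr 1 x 0 0; rewrite scale1r addr0 mul1r in h.
by apply: (addrI (pair x 0)); rewrite addr0 -h.
Qed.

Lemma pairDl x x' y : pair (x + x') y = pair x y + pair x' y.
Proof. by have := hl 1 x x' y; rewrite scale1r mul1r. Qed.

Lemma pairDr x y y' : pair x (y + y') = pair x y + pair x y'.
Proof. by have := hr 1 x y y'; rewrite scale1r mul1r. Qed.

Lemma pairZl a x y : pair (a *: x) y = a * pair x y.
Proof. by have := hl a x 0 y; rewrite addr0 pair0l addr0. Qed.

Lemma pairZr a x y : pair x (a *: y) = a * pair x y.
Proof. by have := hr a x y 0; rewrite addr0 pair0r addr0. Qed.

Lemma pair_suml (I : Type) (r : seq I) (P : pred I) (F : I -> X) y :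
  pair (\sum_(i <- r | P i) F i) y = \sum_(i <- r | P i) pair (F i) y.
Proof.
by apply: (big_morph (fun x => pair x y)); [exact: (fun a b => pairDl a b y)|exact: pair0l].
Qed.

Lemma pair_sumr (I : Type) (r : seq I) (P : pred I) (F : I -> Y) x :
  pair x (\sum_(i <- r | P i) F i) = \sum_(i <- r | P i) pair x (F i).
Proof.
by apply: (big_morph (fun y => pair x y)); [exact: (fun a b => pairDr x a b)|exact: pair0r].
Qed.

End Analysis.

Section OpNorm.
Variable R : realType.
Variable X : normedModType R.
Variable T : {linear X -> X}.
Hypothesis hM : exists M : R, forall x, `|T x| <= M * `|x|.

Lemma opn_ub : has_ubound [set `|T x| | x in [set x : X | `|x| <= 1]].
Proof.
case: hM => M hM'; exists `|M| => _ [x /= hx <-].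
apply: (le_trans (hM' x)); apply: (le_trans (ler_norm _)).
rewrite normrM normr_id; rewrite -[X in _ <= X]mulr1; apply: ler_wpM2l => //.
Qed.

Lemma opn_ge0 : 0 <= opnorm T.
Proof.
apply: (le_trans _ (ub_le_sup opn_ub _)); last by exists 0; rewrite /= ?normr0.
by [].
Qed.

Lemma opn_bound x : `|T x| <= opnorm T * `|x|.
Proof.
have [->|hx] := eqVneq x 0; first by rewrite linear0 !normr0 mulr0.
have hn : 0 < `|x| by rewrite normr_gt0.
have h : `|T (`|x|^-1 *: x)| <= opnorm T.
  apply: ub_le_sup; first exact: opn_ub.
  exists (`|x|^-1 *: x) => //=.
  by rewrite normrZ ger0_norm ?invr_ge0 // mulVf // normr_eq0.
rewrite linearZ normrZ ger0_norm ?invr_ge0 // in h.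
have h2 := ler_wpM2r (ltW hn) h.
by rewrite mulrAC mulVf ?mul1r // normr_eq0 in h2.
Qed.

End OpNorm.

Section Count.
Variable R : realType.
Variable A : {fset nat}.
Variable L : nat.
Local Notation Om := (Omega A L).
Local Notation sg := (@sg R A).

Lemma sum_offdiag_sg p : p \in Om ->
  \sum_k \sum_(l | l != k) sg p k * sg p l = - L%:R.
Proof.
move=> hp.
transitivity (\sum_k (sg p k * \sum_l sg p l - sg p k * sg p k)).
  apply: eq_bigr => k _; rewrite [in RHS](bigD1 k) //= mulrDr addrC addKr mulr_sumr //.
by rewrite sumrB -mulr_suml !(@sum_sg R A L p hp) mul0r (@sum_sg2 R A L p hp) // sub0r.
Qed.

Lemma key (a : A -> A -> R) (k0 l0 : A) : k0 != l0 ->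
  exists c : R,
    c * (#|{: A}| * #|{: A}|.-1)%:R = - (#|Om| * L)%:R /\
    \sum_(p in Om) \sum_k \sum_l sg p k * sg p l * a k l =
    \sum_(p in Om) \sum_k sg p k * sg p k * a k k +
    c * \sum_k \sum_(l | l != k) a k l.
Proof.
move=> hkl0.
pose c := \sum_(p in Om) sg p k0 * sg p l0.
have hc k l : l != k -> \sum_(p in Om) sg p k * sg p l = c.
  by move=> hlk; apply: coef_const => //; rewrite eq_sym.
exists c; split.
  have -> : c * (#|{: A}| * #|{: A}|.-1)%:R =
      \sum_k \sum_(l | l != k) \sum_(p in Om) sg p k * sg p l.
    transitivity (\sum_(k : A) \sum_(l : A | l != k) c); last first.
      by apply: eq_bigr => k _; apply: eq_bigr => l hl; rewrite hc.
    have hs (k : A) : \sum_(l | l != k) c = c *+ #|{: A}|.-1.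
      by rewrite (eq_bigl (fun l => l \in predC1 k)) ?sumr_const ?cardC1 // => l; rewrite inE.
    rewrite (eq_bigr _ (fun k _ => hs k)) (eq_bigl (fun k => k \in {: A})) ?sumr_const //.
    by rewrite -mulrnA mulr_natr mulnC.
  under eq_bigr => k _ do rewrite exchange_big /=.
  rewrite exchange_big /=.
  rewrite (eq_bigr (fun _ => - L%:R)); last first.
    by move=> p hp; exact: (@sum_offdiag_sg p hp).
  by rewrite sumr_const mulNrn -mulrnA mulnC.
rewrite (eq_bigr (fun p => \sum_k sg p k * sg p k * a k k +
    \sum_k \sum_(l | l != k) sg p k * sg p l * a k l)); last first.
  by move=> p _; rewrite -big_split; apply: eq_bigr => k _; rewrite (bigD1 k).
rewrite big_split /=; congr (_ + _).
rewrite exchange_big /=; under eq_bigr => k _ do rewrite exchange_big /=.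
rewrite mulr_sumr; apply: eq_bigr => k _; rewrite mulr_sumr; apply: eq_bigr => l hl.
by rewrite -mulr_suml hc // mulrC.
Qed.

End Count.

Arguments pair_suml {R X Y pair}.
Arguments pair_sumr {R X Y pair}.
Arguments pairZl {R X Y pair}.
Arguments pairZr {R X Y pair}.
Arguments opn_bound {R X T}.
Arguments opn_ge0 {R X T}.

Lemma bvecE (R : realType) (A : {fset nat}) (L : nat) (V : normedModType R) (v : nat -> V) p :
  p \in Omega A L -> bvec v p = \sum_k sg R A p k *: v (fsval k).
Proof.
move=> hp; rewrite /bvec [RHS](bigID (fun k => k \in p.1)) /=.
rewrite [X in _ + X]big1 ?addr0 // => k hk.
by rewrite (@sg_out R A L p k hp hk) scale0r.
Qed.

Lemma maxdel_ge (R : realType) (V : normedModType R) (v : nat -> V) (A : {fset nat}) (k : A) :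
  `|\sum_(l : A | l != k) v (fsval l)| <= maxdel v A.
Proof.
rewrite /maxdel.
have := @le_bigmax_seq _ R _ (enum_fset A) 0 (fsval k) predT
  (fun l => `|\sum_(k0 <- A | k0 != l) v k0|) (fsvalP k) isT.
rewrite big_seq_fsetE /=.
have -> // : \sum_(x : A | fsval x != fsval k) v (fsval x) = \sum_(l : A | l != k) v (fsval l).
by apply: eq_bigl => x; rewrite (inj_eq val_inj).
Qed.

Theorem lemma3p2 (R : realType) (X Y : completeNormedModType R)
  (pair : X -> Y -> R) (e : nat -> X) (f : nat -> Y) (C_d : R)
  (T : {linear X -> X}) (L N : nat) (A : {fset nat}) :
  (* bilinearity of <.,.> *)
  (forall (a : R) (x x' : X) (y : Y), pair (a *: x + x') y = a * pair x y + pair x' y) ->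
  (forall (a : R) (x : X) (y y' : Y), pair x (a *: y + y') = a * pair x y + pair x y') ->
  (* normalized sequences *)
  (forall j, `|e j| = 1) -> (forall j, `|f j| = 1) ->
  (* (B1) *)
  (forall x : X, (forall y : Y, pair x y = 0) -> x = 0) ->
  (* (B2) *)
  (forall y : Y, (forall x : X, pair x y = 0) -> y = 0) ->
  (* (B3) *)
  0 < C_d -> (forall x y, `|pair x y| <= C_d * `|x| * `|y|) ->
  (* (B4) *)
  (forall j k, pair (e j) (f k) = if j == k then 1 else 0) ->
  (* (B5) existence: x = sum_j <x,f_j> e_j in sigma(X,Y) *)
  (forall (x : X) (y : Y),
     (fun n => pair (\sum_(j < n) pair x (f j) *: e j) y) @ \oo --> pair x y) ->
  (* (B5) uniqueness *)
  (forall (x : X) (a : nat -> R),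
     (forall y : Y, (fun n => pair (\sum_(j < n) a j *: e j) y) @ \oo --> pair x y) ->
     forall j, a j = pair x (f j)) ->
  (* T bounded *)
  (exists M : R, forall x, `|T x| <= M * `|x|) ->
  0 < delta_of pair T e f ->
  (* L in 2N, N >= L, |A| = N *)
  (0 < L)%N -> ~~ odd L -> (L <= N)%N -> (#|` A|)%fset = N ->
  ((((\sum_(p in Omega A L) pair (T (bvec e p)) (bvec f p))
       / #|Omega A L|%:R)%:E) >=
   ((delta_of pair T e f)%:E
      - (C_d * opnorm T / (N - 1)%:R)%:E * nu e f N) * L%:R%:E)%E.
Proof.
move=> hl hr he hf _ _ hC hB3 _ _ _ hM hdel hL0 hodd hLN hA.
set opn := opnorm T.
set del := delta_of pair T e f.
have hopn0 : 0 <= opn := opn_ge0 hM.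
have hP x y : `|pair (T x) y| <= C_d * opn * `|x| * `|y|.
  apply: (le_trans (hB3 _ _)).
  rewrite -!mulrA ler_pM2l // mulrA; apply: ler_wpM2r => //.
  exact: opn_bound hM x.
have hNA : #|{: A}| = N by rewrite -hA cardfE.
have hN2 : (1 < N)%N.
  by apply: leq_trans hLN; case: L hL0 hodd => [|[|]].
set a : A -> A -> R := fun k l => pair (T (e (fsval k))) (f (fsval l)).
have hdiag j : del <= pair (T (e j)) (f j).
  apply: ge_inf; last by exists j.
  exists (- (C_d * opn)) => _ [i _ <-].
  have := hP (e i) (f i); rewrite he hf !mulr1 => h.
  by rewrite lerNl; apply: le_trans h; rewrite -normrN ler_norm.
have hexp p : p \in Omega A L ->
    pair (T (bvec e p)) (bvec f p) = \sum_k \sum_l sg R A p k * sg R A p l * a k l.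
  move=> hp; rewrite (@bvecE R A L _ e p hp) (@bvecE R A L _ f p hp) linear_sum (pair_suml hl); apply: eq_bigr => k _.
  rewrite linearZ (pairZl hl) (pair_sumr hr) mulr_sumr; apply: eq_bigr => l _.
  by rewrite (pairZr hr) mulrA.
have hcT (x : R) : \sum_(k : A) x = N%:R * x.
  by rewrite (eq_bigl (fun k => k \in {: A})) ?sumr_const ?hNA ?mulr_natl.
have /card_gt1P [k0 [l0 [_ _ hkl0]]] : (1 < #|{: A}|)%N by rewrite hNA.
have [c [hc hS]] := @key R A L a k0 l0 hkl0.
rewrite (eq_bigr _ hexp) hS.
set Q := \sum_k \sum_(l | l != k) a k l.
set D := \sum_(p in Omega A L) _.
have hD : (#|Omega A L| * L)%:R * del <= D.
  apply: le_trans (_ : \sum_(p in Omega A L) L%:R * del <= _).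
    by rewrite sumr_const natrM -mulrA mulr_natl.
  apply: ler_sum => p hp; rewrite -(@sum_sg2 R A L p hp) mulr_suml; apply: ler_sum => k _.
  apply: ler_wpM2l; [by rewrite -expr2 sqr_ge0 | exact: hdiag].
have hQf : `|Q| <= N%:R * (C_d * opn * maxdel f A).
  have -> : Q = \sum_(k : A) pair (T (e (fsval k))) (\sum_(l : A | l != k) f (fsval l)).
    by rewrite /Q; apply: eq_bigr => k _; rewrite (pair_sumr hr).
  apply: le_trans (ler_norm_sum _ _ _) _.
  rewrite -hcT; apply: ler_sum => k _; apply: le_trans (hP _ _) _.
  rewrite he mulr1; apply: ler_wpM2l; [by apply: mulr_ge0 => //; exact: ltW | exact: maxdel_ge].
have hQe : `|Q| <= N%:R * (C_d * opn * maxdel e A).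
  have -> : Q = \sum_l \sum_(k | k != l) a k l.
    rewrite /Q; under eq_bigr => k _ do rewrite big_mkcond /=.
    rewrite exchange_big /=; apply: eq_bigr => l _; rewrite [RHS]big_mkcond /=.
    by apply: eq_bigr => k _; rewrite eq_sym.
  have -> : \sum_l \sum_(k | k != l) a k l =
      \sum_(l : A) pair (T (\sum_(k : A | k != l) e (fsval k))) (f (fsval l)).
    by apply: eq_bigr => l _; rewrite linear_sum (pair_suml hl).
  apply: le_trans (ler_norm_sum _ _ _) _.
  rewrite -hcT; apply: ler_sum => k _; apply: le_trans (hP _ _) _.
  rewrite hf mulr1; apply: ler_wpM2l; [by apply: mulr_ge0 => //; exact: ltW | exact: maxdel_ge].
set m := Num.min (maxdel e A) (maxdel f A).
have hQ : `|Q| <= N%:R * (C_d * opn * m).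
  by rewrite /m; have [h|h] := leP (maxdel e A) (maxdel f A).
have hW : (0 < #|Omega A L|)%N by apply: Omega_nonempty => //; rewrite hA.
set w : R := #|Omega A L|%:R.
have hw : 0 < w by rewrite /w ltr0n.
set n1 : R := (N - 1)%:R.
have hn1 : 0 < n1 by rewrite /n1 ltr0n subn_gt0.
set n : R := N%:R.
have hn : 0 < n by rewrite /n ltr0n (ltn_trans _ hN2).
have hc' : c * (n * n1) = - (w * L%:R).
  by rewrite /n /n1 /w -natrM -natrM subn1 -hNA.
have hm0 : 0 <= C_d * opn / n1.
  by apply: divr_ge0; [apply: mulr_ge0 => //; exact: ltW | exact: ltW].
set t := C_d * opn / n1 * m.
have ht : t * n1 = C_d * opn * m.
  by rewrite /t; field; rewrite gt_eqF.
have hQ1 : - `|Q| <= Q by rewrite lerNl -normrN ler_norm.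
have hQ2 : Q <= `|Q| by rewrite ler_norm.
have hL : 0 <= (L%:R : R) by [].
set k := n * n1.
have hk : 0 < k by rewrite /k mulr_gt0.
have hc0 : c <= 0.
  rewrite leNgt; apply/negP => hcpos.
  have := mulr_gt0 hcpos hk; rewrite hc' oppr_gt0 ltNge mulr_ge0 // ltW.
have hcQ : - (w * L%:R * t) <= c * Q.
  have h1 : c * `|Q| <= c * Q by nra.
  have h2 : c * (n * (C_d * opn * m)) <= c * `|Q| by nra.
  rewrite -ht in h2.
  have h3 : c * (n * (t * n1)) = c * k * t by rewrite /k; ring.
  rewrite h3 hc' mulNr in h2; exact: le_trans h2 h1.
have hD' : w * L%:R * del <= D by rewrite /w -natrM.
have hfin : (del - t) * L%:R <= (D + c * Q) / w.
  rewrite ler_pdivlMr //; nra.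
apply: (@le_trans _ _ (((del - t) * L%:R)%:E)); last by rewrite lee_fin.
rewrite [X in (_ <= X)%E]EFinM; apply: lee_wpmul2r; first by rewrite lee_fin.
rewrite /t [X in (_ <= X)%E]EFinB (EFinM (C_d * opn / n1) m); apply: leeB => //.
apply: lee_wpmul2l; first by rewrite lee_fin.
by apply: ereal_sup_ubound; exists A.
Qed.
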